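(* Consider the fixed-final-time optimal control problem described in the context. Along an optimal trajectory, the optimal Evader heading $\psi^*$ is constant backwards in time from the final time $T$ until either (1) the constraint is reached (i.e. $\|\mathbf{x}\|=1$), or (2) the initial condition $\mathbf{x}_0$ (time $0$) is reached.
   Context: Pursuer-fixed frame: the Evader's relative position $\mathbf{x}(t)=(x(t),y(t))\in\mathbb{R}^2$ evolves as $\dot x=\mu\cos\psi(t)-1$, $\dot y=\mu\sin\psi(t)$, $\mathbf{x}(0)=\mathbf{x}_0$ with $\|\mathbf{x}_0\|\ge1$, where $\mu\in(0,1)$ and $\psi(t)$ is the Evader's heading. For a fixed final time $T>0$, the Evader maximizes $\|\mathbf{x}(T)\|^2$ subject to the state constraint $\|\mathbf{x}(t)\|\ge 1$ for all $t\in[0,T]$. *)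

(* Defs.v *)
From HB Require Import structures.
From mathcomp Require Import all_boot all_order all_algebra.
From mathcomp Require Import all_classical all_reals all_analysis.
Set Implicit Arguments. Unset Strict Implicit. Unset Printing Implicit Defensive.
Import Order.TTheory GRing.Theory Num.Theory.
Local Open Scope classical_set_scope.
Local Open Scope ring_scope.

Definition sqnorm (R : realType) (p : R * R) : R := p.1 ^+ 2 + p.2 ^+ 2.

Definition admissible (R : realType) (psi : R -> R) : Prop :=
  measurable_fun setT psi.

(* Relative position x(t) in the Pursuer-fixed frame, the (Caratheodory)
   solution of  x' = mu cos psi - 1,  y' = mu sin psi,  x(0) = x0. *)
Definition traj (R : realType) (mu : R) (x0 : R * R) (psi : R -> R) (t : R)
  : R * R :=
  (x0.1 + \int[@lebesgue_measure R]_(s in `[0, t]) (mu * cos (psi s) - 1),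
   x0.2 + \int[@lebesgue_measure R]_(s in `[0, t]) (mu * sin (psi s))).

Definition feasible (R : realType) (mu T : R) (x0 : R * R) (psi : R -> R)
  : Prop :=
  forall t, 0 <= t <= T -> 1 <= sqnorm (traj mu x0 psi t).

Definition optimal (R : realType) (mu T : R) (x0 : R * R) (psi : R -> R)
  : Prop :=
  admissible psi /\ feasible mu T x0 psi /\
  forall phi : R -> R, admissible phi -> feasible mu T x0 phi ->
    sqnorm (traj mu x0 phi T) <= sqnorm (traj mu x0 psi T).

(* Main.v *)
Require Import Defs.
From HB Require Import structures.
From mathcomp Require Import all_boot all_order all_algebra.
From mathcomp Require Import all_classical all_reals all_analysis.
From mathcomp Require Import ring lra.
Import Order.TTheory GRing.Theory Num.Theory.
Local Open Scope classical_set_scope.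
Local Open Scope ring_scope.

Module Lemma4Helpers.
Import numFieldNormedType.Exports.


Section H.
Context {R : realType}.
Notation leb := (@lebesgue_measure R).

Definition bm (f : R -> R) := measurable_fun setT f /\ exists M, forall x, `|f x| <= M.

Lemma bm_int f (A : set R) a b : bm f -> measurable A -> A `<=` `[a,b] ->
  leb.-integrable A (EFin \o f).
Proof.
move=> [mf [M fb]] mA Aab.
apply: (@integrableS _ _ _ leb `[a,b] A); [exact: measurable_itv|exact: mA|exact: Aab|].
apply: measurable_bounded_integrable => //.
- rewrite /= lebesgue_measure_itv; case: ifP => _ //; exact: ltry.
- exact: measurable_funS mf.
- exists M; split => //; first by rewrite num_real. 
  move=> M' MM' x _; exact: le_trans (fb x) (ltW MM').
Qed.

Lemma bm_intc f a b : bm f -> leb.-integrable `[a,b] (EFin \o f).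
Proof. by move=> bf; apply: (@bm_int f _ a b) => //; exact: measurable_itv. Qed.

Lemma bm_cst k : bm (fun=> k).
Proof. by split; [exact: measurable_cst | exists `|k|]. Qed.

Lemma bmD f g : bm f -> bm g -> bm (fun x => f x + g x).
Proof.
move=> [mf [M fM]] [mg [N gN]]; split; first exact: measurable_realfun.measurable_funD.
by exists (M + N) => x; apply: le_trans (ler_normD _ _) _; apply: lerD.
Qed.

Lemma bmB f g : bm f -> bm g -> bm (fun x => f x - g x).
Proof.
move=> [mf [M fM]] [mg [N gN]]; split; first exact: measurable_realfun.measurable_funB.
by exists (M + N) => x; apply: le_trans (ler_normB _ _) _; apply: lerD.
Qed.

Lemma bmM f g : bm f -> bm g -> bm (fun x => f x * g x).
Proof.
move=> [mf [M fM]] [mg [N gN]]; split; first exact: measurable_realfun.measurable_funM.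
exists (M * N) => x; rewrite normrM; apply: ler_pM => //.
Qed.

Lemma int_add f a b c : bm f -> a <= b -> b <= c ->
  \int[leb]_(x in `[a,c]) f x = \int[leb]_(x in `[a,b]) f x + \int[leb]_(x in `[b,c]) f x.
Proof.
move=> bf ab bc.
have := @Rintegral_itvB R f (BLeft a) (BRight c) b.
rewrite Rintegral_itv_obnd_cbnd; last first.
  apply: (@bm_int f _ b c) bf _ _ => // x /=; rewrite !in_itv/= => /andP[/ltW -> ->] //.
move=> H; rewrite -H; first by rewrite addrC subrK.
all: try by rewrite bnd_simp.
exact: (@bm_int f _ a c).
Qed.

Lemma int_bound (f : R -> R) (M a b : R) : measurable_fun setT f -> (forall x, `|f x| <= M) -> a <= b ->
  `|\int[leb]_(x in `[a,b]) f x| <= M * (b - a).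
Proof.
move=> mf fM ab.
have bf : bm f by split => //; exists M.
have mab : measurable (`[a,b] : set (measurableTypeR R)) by exact: measurable_itv.
have h1 := @le_normr_Rintegral _ _ _ leb `[a,b] f mab (bm_intc _ a b bf).
apply: le_trans h1 _.
have h2 := @le_Rintegral _ _ _ leb `[a,b] (fun x => `|f x|) (fun=> M) mab.
apply: le_trans (h2 _ _ _) _.
- exact: (integrable_norm (bm_intc _ a b bf)).
- exact: (bm_intc _ a b (bm_cst M)).
- by move=> x _.
rewrite Rintegral_cst //= lebesgue_measure_itv /=.
case: ltP => ab'; first by rewrite /= mulrC.
have M0 : 0 <= M by apply: le_trans (fM a).
by rewrite /= mulr0 mulr_ge0 // subr_ge0.
Qed.

Lemma int_bound_bm f a b : bm f -> a <= b -> exists M, 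
  `|\int[leb]_(x in `[a,b]) f x| <= M * (b - a).
Proof. by move=> [mf [M fM]] ab; exists M; apply: int_bound. Qed.

Lemma int_half_open f a b : bm f ->
  \int[leb]_(x in `[a,b[) f x = \int[leb]_(x in `[a,b]) f x.
Proof.
move=> bf; rewrite Rintegral_itv_bndo_bndc //.
apply: (@bm_int f _ a b) bf (measurable_itv _) _.
by apply: subset_itvl; rewrite bnd_simp.
Qed.

Lemma int_half_open' f a b : bm f ->
  \int[leb]_(x in `]a,b]) f x = \int[leb]_(x in `[a,b]) f x.
Proof.
move=> bf; rewrite Rintegral_itv_obnd_cbnd //.
apply: (@bm_int f _ a b) bf (measurable_itv _) _.
by apply: subset_itvr; rewrite bnd_simp.
Qed.

Lemma modif F G s h : bm F -> bm G -> 0 <= s -> 0 <= h ->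
  (forall t, ~~ ((s <= t) && (t <= s + h)) -> F t = G t) ->
  [/\ forall t, t <= s -> \int[leb]_(x in `[0,t]) F x = \int[leb]_(x in `[0,t]) G x,
      forall t, s <= t -> t <= s + h ->
        \int[leb]_(x in `[0,t]) F x - \int[leb]_(x in `[0,t]) G x =
        \int[leb]_(x in `[s,t]) F x - \int[leb]_(x in `[s,t]) G x &
      forall t, s + h <= t ->
        \int[leb]_(x in `[0,t]) F x - \int[leb]_(x in `[0,t]) G x =
        \int[leb]_(x in `[s,s+h]) F x - \int[leb]_(x in `[s,s+h]) G x].
Proof.
move=> bF bG s0 h0 FG.
have P1 : forall t, t <= s -> \int[leb]_(x in `[0,t]) F x = \int[leb]_(x in `[0,t]) G x.
  move=> t ts; rewrite -!int_half_open //; apply: eq_Rintegral => x.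
  rewrite inE /= in_itv /= => /andP[_ xt]; apply: FG.
  by rewrite negb_and -!ltNge (lt_le_trans xt ts).
have P2 : forall t, s <= t ->
        \int[leb]_(x in `[0,t]) F x - \int[leb]_(x in `[0,t]) G x =
        \int[leb]_(x in `[s,t]) F x - \int[leb]_(x in `[s,t]) G x.
  move=> t st; rewrite (int_add _ _ _ _ bF s0 st) (int_add _ _ _ _ bG s0 st) P1 //; ring.
split => //.
- by move=> t st _; exact: P2.
move=> t sht; have sh : s <= s + h by lra.
rewrite P2; last lra.
rewrite (int_add _ _ _ _ bF sh sht) (int_add _ _ _ _ bG sh sht).
suff -> : \int[leb]_(x in `[s + h, t]) F x = \int[leb]_(x in `[s + h, t]) G x by ring.
rewrite -!int_half_open' //; apply: eq_Rintegral => x.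
rewrite inE /= in_itv /= => /andP[xt _]; apply: FG.
by rewrite negb_and -!ltNge xt orbT.
Qed.

End H.


Section T.
Context {R : realType}.
Notation leb := (@lebesgue_measure R).

Lemma bm_cos (psi : R -> R) : measurable_fun setT psi -> bm (fun t => cos (psi t)).
Proof.
move=> mp; split; last by exists 1 => x; exact: cos_max.
exact: measurableT_comp (measurable_realfun.continuous_measurable_fun (@continuous_cos R)) mp.
Qed.

Lemma bm_sin (psi : R -> R) : measurable_fun setT psi -> bm (fun t => sin (psi t)).
Proof.
move=> mp; split; last by exists 1 => x; exact: sin_max.
exact: measurableT_comp (measurable_realfun.continuous_measurable_fun (@continuous_sin R)) mp.
Qed.

Lemma angle (e1 e2 : R) : e1^+2 + e2^+2 = 1 -> exists c, cos c = e1 /\ sin c = e2.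
Proof.
move=> he.
have e1b : -1 <= e1 <= 1.
  have : e1 ^+ 2 <= 1 by rewrite -he lerDl sqr_ge0.
  by move=> h; apply/andP; split; nra.
have hs : Num.sqrt (1 - e1 ^+ 2) = `|e2| by rewrite -he addrAC subrr add0r sqrtr_sqr.
have cK : cos (acos e1) = e1 by apply: acosK; rewrite in_itv.
have [e2p|e2n] := leP 0 e2.
  by exists (acos e1); rewrite cK sin_acos // hs ger0_norm.
by exists (- acos e1); rewrite cosN sinN cK sin_acos // hs ltr0_norm // opprK.
Qed.

Lemma traj_cont (mu : R) (x0 : R * R) (psi : R -> R) (a T : R) : 0 <= a -> a <= T -> measurable_fun setT psi ->
  {within (`[a,T] : set R), continuous (fun t => sqnorm (traj mu x0 psi t))}.
Proof.
move=> a0 aT mp.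
have T0 : 0 <= T by lra.
have b1 : bm (fun s => mu * cos (psi s) - 1) by apply: bmB; [apply: bmM; [apply: bm_cst|apply: bm_cos]|apply: bm_cst].
have b2 : bm (fun s => mu * sin (psi s)) by apply: bmM; [apply: bm_cst|apply: bm_sin].
have c1 := parameterized_integral_continuous T0 (bm_intc _ 0 T b1).
have c2 := parameterized_integral_continuous T0 (bm_intc _ 0 T b2).
have sub : `[a, T] `<=` `[0, T] by apply: subset_itvr; rewrite bnd_simp.
have {}c1 := continuous_subspaceW sub c1.
have {}c2 := continuous_subspaceW sub c2.
move=> x.
have h1 : {for x, continuous (fun t : subspace `[a,T] => \int[leb]_(s in `[0,t]) (mu * cos (psi s) - 1))} := c1 x.
have h2 : {for x, continuous (fun t : subspace `[a,T] => \int[leb]_(s in `[0,t]) (mu * sin (psi s)))} := c2 x.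
have k1 : {for x, continuous (fun t : subspace `[a,T] => x0.1 + \int[leb]_(s in `[0,t]) (mu * cos (psi s) - 1))}.
  by apply: continuousD => //; apply: cst_continuous.
have k2 : {for x, continuous (fun t : subspace `[a,T] => x0.2 + \int[leb]_(s in `[0,t]) (mu * sin (psi s)))}.
  by apply: continuousD => //; apply: cst_continuous.
have E : (fun t : R => sqnorm (traj mu x0 psi t)) = (fun t => 
   (x0.1 + \int[leb]_(s in `[0,t]) (mu * cos (psi s) - 1)) * (x0.1 + \int[leb]_(s in `[0,t]) (mu * cos (psi s) - 1))
 + (x0.2 + \int[leb]_(s in `[0,t]) (mu * sin (psi s))) * (x0.2 + \int[leb]_(s in `[0,t]) (mu * sin (psi s)))).
  by apply/funext => t; rewrite /sqnorm /traj /= !expr2.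
rewrite /from_subspace E.
exact: continuousD (continuousM k1 k1) (continuousM k2 k2).
Qed.

Lemma ae_from_int0 (g : R -> R) (t1 T : R) (P : R -> Prop) : bm g -> (forall x, 0 <= g x) ->
  \int[leb]_(x in `]t1,T[) g x = 0 -> (forall x, g x = 0 -> P x) ->
  {ae leb, forall x, x \in `]t1,T[ -> P x}.
Proof.
move=> bg g0 i0 gP.
have mD : measurable (`]t1, T[ : set (measurableTypeR R)) by exact: measurable_itv.
have ig : leb.-integrable `]t1,T[ (EFin \o g).
  apply: (@bm_int _ g `]t1,T[ t1 T bg (measurable_itv _)).
  by move=> x; rewrite /= !in_itv /= => /andP[/ltW -> /ltW ->].
have mg := (integrableP _ _ _ ig).1.
have E : (\int[leb]_(x in `]t1,T[) (g x)%:E = 0)%E.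
  rewrite -[LHS]fineK; last exact: integrable_fin_num.
  by move: i0; rewrite /Rintegral => ->.
have H0 : (\int[leb]_(x in `]t1,T[) `|(EFin \o g) x|)%E = 0.
  rewrite -E; apply: eq_integral => x _ /=.
  by rewrite ger0_norm.
have H := (ae_eq_integral_abs leb mD mg).1 H0.
apply: filterS H => x /= H xD; apply: gP.
by have := H xD; case.
Qed.

End T.


Section M.
Context {R : realType}.
Notation leb := (@lebesgue_measure R).

Lemma int_open f (a b : R) : bm f ->
  \int[leb]_(x in `]a,b[) f x = \int[leb]_(x in `[a,b]) f x.
Proof.
move=> bf; rewrite Rintegral_itv_bndo_bndc; last first.
  apply: (@bm_int _ f _ a b bf (measurable_itv _)).
  by move=> x; rewrite /= !in_itv /= => /andP[/ltW -> /ltW ->].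
by rewrite int_half_open'.
Qed.

Lemma modif_bound F G (s h : R) : bm F -> bm G -> 0 <= s -> 0 <= h ->
  (forall x, `|F x| <= 2) -> (forall x, `|G x| <= 2) ->
  (forall t, ~~ ((s <= t) && (t <= s + h)) -> F t = G t) ->
  forall t, s <= t ->
  `|\int[leb]_(x in `[0,t]) F x - \int[leb]_(x in `[0,t]) G x| <= 4 * h.
Proof.
move=> bF bG s0 h0 F2 G2 FG t st.
have [_ P2 P3] := modif _ _ _ _ bF bG s0 h0 FG.
have mF := bF.1; have mG := bG.1.
have [tsh|tsh] := leP t (s + h).
  rewrite P2 //.
  apply: le_trans (ler_normB _ _) _.
  have := int_bound _ _ _ _ mF F2 st; have := int_bound _ _ _ _ mG G2 st; lra.
rewrite P3; last lra.
have sh : s <= s + h by lra.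
apply: le_trans (ler_normB _ _) _.
have := int_bound _ _ _ _ mF F2 sh; have := int_bound _ _ _ _ mG G2 sh; lra.
Qed.

Lemma F1_bound (mu : R) (psi : R -> R) : 0 <= mu <= 1 -> forall x, `|mu * cos (psi x) - 1| <= 2.
Proof.
move=> /andP[m0 m1] x; have := cos_max (psi x); rewrite ler_norml => /andP[c1 c2].
rewrite ler_norml; apply/andP; split; nra.
Qed.

Lemma F2_bound (mu : R) (psi : R -> R) : 0 <= mu <= 1 -> forall x, `|mu * sin (psi x)| <= 2.
Proof.
move=> /andP[m0 m1] x; have := sin_max (psi x); rewrite ler_norml => /andP[c1 c2].
rewrite ler_norml; apply/andP; split; nra.
Qed.

Lemma bmF1 (mu : R) (psi : R -> R) : measurable_fun setT psi -> bm (fun s => mu * cos (psi s) - 1).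
Proof. by move=> mp; apply: bmB; [apply: bmM; [apply: bm_cst|apply: bm_cos]|apply: bm_cst]. Qed.

Lemma bmF2 (mu : R) (psi : R -> R) : measurable_fun setT psi -> bm (fun s => mu * sin (psi s)).
Proof. by move=> mp; apply: bmM; [apply: bm_cst|apply: bm_sin]. Qed.

Lemma traj_bound (mu : R) x0 (psi : R -> R) t : measurable_fun setT psi -> 0 <= mu <= 1 -> 0 <= t ->
  `|(traj mu x0 psi t).1| <= `|x0.1| + 2 * t /\ `|(traj mu x0 psi t).2| <= `|x0.2| + 2 * t.
Proof.
move=> mp mb t0; rewrite /traj /=; split.
  apply: le_trans (ler_normD _ _) _; rewrite lerD2l.
  by have := int_bound _ _ _ _ (bmF1 mu psi mp).1 (F1_bound mu psi mb) t0; rewrite subr0.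
apply: le_trans (ler_normD _ _) _; rewrite lerD2l.
by have := int_bound _ _ _ _ (bmF2 mu psi mp).1 (F2_bound mu psi mb) t0; rewrite subr0.
Qed.

Lemma improve (mu T : R) x0 (psi : R -> R) (c e1 e2 s h m B a : R) :
  0 < mu < 1 -> measurable_fun setT psi -> feasible mu T x0 psi ->
  0 <= a -> a <= s -> 0 <= h -> s + h <= T ->
  cos c = e1 -> sin c = e2 ->
  (forall t, a <= t <= T -> 1 + m <= sqnorm (traj mu x0 psi t)) ->
  (forall t, 0 <= t <= T -> `|(traj mu x0 psi t).1| <= B /\ `|(traj mu x0 psi t).2| <= B) ->
  16 * B * h <= m -> 0 <= B ->
  let phi := fun t => if (s <= t) && (t <= s + h) then c else psi t in
  [/\ admissible phi, feasible mu T x0 phi,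
  (traj mu x0 phi T).1 = (traj mu x0 psi T).1 + mu * \int[leb]_(x in `[s,s+h]) (e1 - cos (psi x)) &
  (traj mu x0 phi T).2 = (traj mu x0 psi T).2 + mu * \int[leb]_(x in `[s,s+h]) (e2 - sin (psi x))].
Proof.
move=> /andP[mu0 mu1] mp feas a0 As h0 shT ce se marg Bb hm B0 phi.
have mb : 0 <= mu <= 1 by rewrite !ltW.
have s0 : 0 <= s by lra.
have mphi : measurable_fun setT phi.
  apply: measurable_fun_ifT => //.
  apply: measurable_and; apply: measurable_realfun.measurable_fun_ler => //; exact: measurable_cst.
have FG1 : forall t, ~~ ((s <= t) && (t <= s + h)) -> 
    (fun x => mu * cos (phi x) - 1) t = (fun x => mu * cos (psi x) - 1) t.
  by move=> t /negbTE H; rewrite /phi /= H.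
have FG2 : forall t, ~~ ((s <= t) && (t <= s + h)) -> 
    (fun x => mu * sin (phi x)) t = (fun x => mu * sin (psi x)) t.
  by move=> t /negbTE H; rewrite /phi /= H.
have [Q1 _ R1] := modif _ _ _ _ (bmF1 mu phi mphi) (bmF1 mu psi mp) s0 h0 FG1.
have [Q2 _ R2] := modif _ _ _ _ (bmF2 mu phi mphi) (bmF2 mu psi mp) s0 h0 FG2.
have D1 := modif_bound _ _ _ _ (bmF1 mu phi mphi) (bmF1 mu psi mp) s0 h0 (F1_bound mu phi mb) (F1_bound mu psi mb) FG1.
have D2 := modif_bound _ _ _ _ (bmF2 mu phi mphi) (bmF2 mu psi mp) s0 h0 (F2_bound mu phi mb) (F2_bound mu psi mb) FG2.
have onI : {in `[s, s + h], forall x, phi x = c}.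
  by move=> x; rewrite in_itv /= /phi => ->.
split => //.
- move=> t /andP[t0 tT].
  have [ts|st] := leP t s.
    by have := feas t; rewrite t0 tT /traj Q1 // Q2 //; apply.
  have := marg t; rewrite (le_trans As (ltW st)) tT => /(_ isT).
  have := Bb t; rewrite t0 tT => /(_ isT) [].
  have := D1 t (ltW st); have := D2 t (ltW st).
  rewrite /sqnorm /traj /=.
  set y1 := \int[leb]_(x in `[0, t]) (mu * cos (phi x) - 1).
  set x1 := \int[leb]_(x in `[0, t]) (mu * cos (psi x) - 1).
  set y2 := \int[leb]_(x in `[0, t]) (mu * sin (phi x)).
  set x2 := \int[leb]_(x in `[0, t]) (mu * sin (psi x)).
  move=> d2 d1 b1 b2 mm.
  have k1 : `|(x0.1 + x1) * (y1 - x1)| <= B * (4 * h) by rewrite normrM ler_pM.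
  have k2 : `|(x0.2 + x2) * (y2 - x2)| <= B * (4 * h) by rewrite normrM ler_pM.
  move: k1 k2; rewrite !ler_norml => /andP[k1 _] /andP[k2 _].
  have q1 : 0 <= (y1 - x1) ^+ 2 by exact: sqr_ge0.
  have q2 : 0 <= (y2 - x2) ^+ 2 by exact: sqr_ge0.
  nra.
- have mI : measurable (`[s, s + h] : set (measurableTypeR R)) by exact: measurable_itv.
  have J1 : \int[leb]_(x in `[s,s+h]) (mu * cos (phi x) - 1) - \int[leb]_(x in `[s,s+h]) (mu * cos (psi x) - 1)
      = mu * \int[leb]_(x in `[s,s+h]) (e1 - cos (psi x)).
    rewrite -RintegralB //; try exact: (bm_intc _ _ _ (bmF1 mu phi mphi)); try exact: (bm_intc _ _ _ (bmF1 mu psi mp)).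
    rewrite -RintegralZl //; last by apply: bm_intc; apply: bmB; [apply: bm_cst|apply: bm_cos].
    by apply: eq_Rintegral => x; rewrite inE => xI; rewrite onI // ce; ring.
  have := R1 T shT; rewrite J1 /traj /= => H; lra.
- have mI : measurable (`[s, s + h] : set (measurableTypeR R)) by exact: measurable_itv.
  have J2 : \int[leb]_(x in `[s,s+h]) (mu * sin (phi x)) - \int[leb]_(x in `[s,s+h]) (mu * sin (psi x))
      = mu * \int[leb]_(x in `[s,s+h]) (e2 - sin (psi x)).
    rewrite -RintegralB //; try exact: (bm_intc _ _ _ (bmF2 mu phi mphi)); try exact: (bm_intc _ _ _ (bmF2 mu psi mp)).
    rewrite -RintegralZl //; last by apply: bm_intc; apply: bmB; [apply: bm_cst|apply: bm_sin].
    by apply: eq_Rintegral => x; rewrite inE => xI; rewrite onI // se; ring.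
  have := R2 T shT; rewrite J2 /traj /= => H; lra.
Qed.

End M.


Lemma arith (R : realType) (p1 p2 d1 d2 k : R) : p1 * d1 + p2 * d2 = k -> 0 < k ->
  (p1 + d1)^+2 + (p2 + d2)^+2 <= p1^+2 + p2^+2 -> False.
Proof. move=> h1 h2 h3; have := sqr_ge0 d1; have := sqr_ge0 d2; nra. Qed.

End Lemma4Helpers.
Import Lemma4Helpers.

Theorem lemma4 (R : realType) (mu T : R) (x0 : R * R) (psi : R -> R) (t1 : R) :
  0 < mu -> mu < 1 -> 0 < T -> 1 <= sqnorm x0 ->
  optimal mu T x0 psi ->
  0 <= t1 <= T ->
  (t1 = 0 \/ sqnorm (traj mu x0 psi t1) = 1) ->
  (forall t, t1 < t <= T -> 1 < sqnorm (traj mu x0 psi t)) ->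
  exists c : R, {ae @lebesgue_measure R, forall t, t \in `]t1, T[ ->
      cos (psi t) = cos c /\ sin (psi t) = sin c}.
Proof.
move=> mu0 mu1 T0 x0n [mp [feas opt]] /andP[t10 t1T] _ after.
have mb : 0 < mu < 1 by rewrite mu0 mu1.
have mb' : 0 <= mu <= 1 by rewrite !ltW.
have [t1T'|Tt1] := ltP t1 T; last first.
  exists 0; apply: aeW => t; rewrite in_itv /= => /andP[h1 h2].
  by exfalso; have := lt_trans h1 h2; rewrite ltNge Tt1.
pose P := traj mu x0 psi T.
have PN : 1 < sqnorm P by apply: after; rewrite t1T' lexx.
pose r := Num.sqrt (sqnorm P).
have r0 : 0 < r by rewrite sqrtr_gt0; lra.
have rr : r ^+ 2 = sqnorm P by rewrite sqr_sqrtr //; lra.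
pose e1 := P.1 / r. pose e2 := P.2 / r.
have P1e : P.1 = e1 * r by rewrite /e1 divfK // gt_eqF.
have P2e : P.2 = e2 * r by rewrite /e2 divfK // gt_eqF.
have he : e1 ^+ 2 + e2 ^+ 2 = 1.
  have H : (e1 ^+2 + e2^+2) * r^+2 = r ^+ 2.
    by rewrite [in RHS]rr /sqnorm P1e P2e; ring.
  have r2 : r ^+ 2 != 0 by rewrite expf_neq0 // gt_eqF.
  by move/(congr1 (fun z => z / r^+2)): H; rewrite mulfK // divff.
have [c [ce se]] := angle _ _ he.
pose g := fun t => 1 - (cos (psi t) * e1 + sin (psi t) * e2).
have gid : forall t, (cos (psi t) - e1)^+2 + (sin (psi t) - e2)^+2 = 2 * g t.
  by move=> t; have := cos2Dsin2 (psi t); rewrite /g; nra.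
have g0 : forall t, 0 <= g t.
  move=> t; have := gid t.
  have := sqr_ge0 (cos (psi t) - e1); have := sqr_ge0 (sin (psi t) - e2); lra.
have g2 : forall t, `|g t| <= 2.
  move=> t; rewrite ger0_norm //.
  have := sqr_ge0 (cos (psi t) + e1); have := sqr_ge0 (sin (psi t) + e2).
  have := cos2Dsin2 (psi t); rewrite /g; nra.
have bg : bm g.
  by apply: bmB; [apply: bm_cst|apply: bmD; apply: bmM; (apply: bm_cst || apply: bm_cos || apply: bm_sin)].
have key : forall a, t1 < a -> a <= T -> \int[@lebesgue_measure R]_(x in `[a,T]) g x <= 0.
  move=> a t1a aT.
  have a0 : 0 <= a by lra.
  have [tm tmI tmmin] := EVT_min aT (traj_cont mu x0 psi a T a0 aT mp).
  move: tmI; rewrite in_itv /= => /andP[atm tmT].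
  pose m := sqnorm (traj mu x0 psi tm) - 1.
  have m0 : 0 < m by have := after tm; rewrite /m tmT (lt_le_trans t1a atm) => /(_ isT); lra.
  have marg : forall t, a <= t <= T -> 1 + m <= sqnorm (traj mu x0 psi t).
    move=> t ht; have := tmmin t; rewrite in_itv /= ht => /(_ isT); rewrite /m; lra.
  pose B := `|x0.1| + `|x0.2| + 2 * T + 1.
  have B0 : 0 < B by have := normr_ge0 x0.1; have := normr_ge0 x0.2; rewrite /B; lra.
  have Bb : forall t, 0 <= t <= T -> `|(traj mu x0 psi t).1| <= B /\ `|(traj mu x0 psi t).2| <= B.
    move=> t /andP[t0 tT]; have [h1 h2] := traj_bound mu x0 psi t mp mb' t0.
    by split; have := normr_ge0 x0.1; have := normr_ge0 x0.2; rewrite /B; lra.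
  pose h0 := m / (16 * B).
  have h0p : 0 < h0 by rewrite /h0 divr_gt0 // mulr_gt0.
  have h0B : 16 * B * h0 = m by rewrite /h0 mulrC divfK // gt_eqF // mulr_gt0.
  have step : forall s h, a <= s -> 0 <= h -> h <= h0 -> s + h <= T ->
      \int[@lebesgue_measure R]_(x in `[s,s+h]) g x <= 0.
    move=> s h As hh0 hle shT; rewrite leNgt; apply/negP => gpos.
    have hm : 16 * B * h <= m by rewrite -h0B; apply: ler_wpM2l => //; rewrite mulr_ge0 // ltW.
    have [admphi feasphi E1 E2] := improve mu T x0 psi c e1 e2 s h m B a mb mp feas a0 As hh0 shT ce se marg Bb hm (ltW B0).
    have := opt _ admphi feasphi.
    rewrite /sqnorm E1 E2 -/P.
    set I1 := \int[@lebesgue_measure R]_(x in `[s, s + h]) (e1 - cos (psi x)).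
    set I2 := \int[@lebesgue_measure R]_(x in `[s, s + h]) (e2 - sin (psi x)).
    have mI : measurable (`[s, s + h] : set (measurableTypeR R)) by exact: measurable_itv.
    have kk : P.1 * I1 + P.2 * I2 = r * \int[@lebesgue_measure R]_(x in `[s,s+h]) g x.
      rewrite /I1 /I2 -!RintegralZl //; last 3 first.
      - exact: bm_intc.
      - by apply: bm_intc; apply: bmB; [apply: bm_cst|apply: bm_sin].
      - by apply: bm_intc; apply: bmB; [apply: bm_cst|apply: bm_cos].
      rewrite -RintegralD //; last 2 first.
      - by apply: bm_intc; apply: bmM; [apply: bm_cst|apply: bmB; [apply: bm_cst|apply: bm_cos]].
      - by apply: bm_intc; apply: bmM; [apply: bm_cst|apply: bmB; [apply: bm_cst|apply: bm_sin]].
      apply: eq_Rintegral => x _; rewrite P1e P2e /g.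
      transitivity (r * (e1 ^+ 2 + e2 ^+ 2 - (cos (psi x) * e1 + sin (psi x) * e2))); first by ring.
      by rewrite he.
    have q3 : 0 < mu * r * \int[@lebesgue_measure R]_(x in `[s,s+h]) g x by rewrite !mulr_gt0.
    have kk' : P.1 * (mu * I1) + P.2 * (mu * I2) = mu * r * \int[@lebesgue_measure R]_(x in `[s,s+h]) g x.
      by rewrite -mulrA -kk; ring.
    exact: arith kk' q3.
  have [n nP] : exists n : nat, (T - a) / h0 < n%:R.
    by exists (Num.bound ((T - a) / h0)); apply: archi_boundP; apply: divr_ge0; [lra|exact: ltW].
  have n0 : 0 < n%:R :> R by apply: le_lt_trans nP; apply: divr_ge0; [lra|exact: ltW].
  pose h := (T - a) / n%:R.
  have hh0 : h <= h0.
    rewrite /h ler_pdivrMr //; move: nP; rewrite ltr_pdivrMr // => nP; lra.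
  have hp : 0 <= h by rewrite /h; apply: divr_ge0; [lra|exact: ltW].
  have nh : n%:R * h = T - a by rewrite /h mulrC divfK // gt_eqF.
  pose G := fun y : R => \int[@lebesgue_measure R]_(x in `[a, y]) g x.
  have ind : forall k, (k <= n)%N -> G (a + k%:R * h) <= 0.
    elim=> [|k IH] kn.
      rewrite mul0r addr0 /G.
      have := int_bound _ _ _ _ bg.1 g2 (lexx a).
      by rewrite subrr mulr0 normr_le0 => /eqP ->.
    have kn' : (k <= n)%N by apply: ltnW.
    have kh0 : 0 <= k%:R * h by rewrite mulr_ge0.
    have kS : a + k.+1%:R * h = (a + k%:R * h) + h by rewrite -natr1; ring.
    have kT : k.+1%:R * h <= n%:R * h by rewrite ler_wpM2r // ler_nat.
    rewrite -natr1 mulrDl mul1r addrA /G (int_add _ a (a + k%:R * h) _ bg); [| lra | lra].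
    have kT' : a + k%:R * h + h <= T by move: kT; rewrite -natr1 mulrDl mul1r nh; lra.
    have q1 : a <= a + k%:R * h by lra.
    have := IH kn'; have := step (a + k%:R * h) h q1 hp hh0 kT'; rewrite /G; lra.
  have := ind n (leqnn n); rewrite nh /G.
  by rewrite addrC subrK.
have I0 : \int[@lebesgue_measure R]_(x in `[t1,T]) g x = 0.
  apply/eqP; rewrite eq_le Rintegral_ge0 ?andbT; last by move=> x _; exact: g0.
  rewrite leNgt; apply/negP => Ipos.
  set I := \int[@lebesgue_measure R]_(x in `[t1,T]) g x in Ipos *.
  pose d := Num.min (I / 4) (T - t1).
  have d0 : 0 < d by rewrite lt_min divr_gt0 // subr_gt0 t1T'.
  have dI : d <= I / 4 by rewrite ge_min lexx.
  have dT : d <= T - t1 by rewrite ge_min lexx orbT.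
  have := key (t1 + d) ltac:(lra) ltac:(lra).
  have := int_bound _ _ _ _ bg.1 g2 (ltW (ltr_pwDr d0 (lexx t1))).
  rewrite ler_norml => /andP[_ q1] q2.
  have Isplit := int_add _ t1 (t1 + d) T bg ltac:(lra) ltac:(lra).
  rewrite -/I in Isplit.
  lra.
exists c.
apply: (ae_from_int0 _ _ _ _ bg g0); first by rewrite int_open.
move=> x gx0; have := gid x; rewrite gx0 mulr0 => h.
have := sqr_ge0 (cos (psi x) - e1); have := sqr_ge0 (sin (psi x) - e2).
split; [rewrite ce|rewrite se]; nra.
Qed.
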